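(* Let $\phi$ be a connected circuit all of whose constraints are strictly terraced. Then $[\![\phi]\!]$ is strictly terraced.
   Context: $e_i$ is the characteristic vector of $\{i\}$ and $\oplus$ is coordinatewise addition mod 2. A signature $F:\{0,1\}^J\to\mathbb{Q}_{\ge0}$ is strictly terraced if for all $x\in\{0,1\}^J$ and $i,j\in J$, $F(x)=0$ implies $F(x\oplus e_i)=F(x\oplus e_j)$. A circuit $\phi$ consists of: a finite set $J$ of incidences; a finite set $V$ of vertices with sets $J_v$ partitioning $J$; a set $A\subseteq J$ of external edges; a partition $E$ of $J\setminus A$ into pairs (internal edges); and constraints $F_v:\{0,1\}^{J_v}\to\mathbb{Q}_{\ge0}$. An assignment is $x\in\{0,1\}^J$ with $x_i=x_j$ for all $\{i,j\}\in E$; the signature is $[\![\phi]\!]:\{0,1\}^A\to\mathbb{Q}_{\ge0}$, $[\![\phi]\!](x)=\sum_{x'}\prod_vF_v(x'|_{J_v})$ over assignments $x'$ extending $x$. $\phi$ is connected if the multigraph on $V$ with an edge $uv$ for each $\{i,j\}\in E$, $i\in J_u$, $j\in J_v$, is connected. *)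

(* Defs.v *)
From HB Require Import structures.
From mathcomp Require Import all_boot all_order all_algebra.
Set Implicit Arguments. Unset Strict Implicit. Unset Printing Implicit Defensive.
Import Order.TTheory GRing.Theory Num.Theory.
Local Open Scope ring_scope.

Definition flip (K : finType) (x : {ffun K -> bool}) (i : K) : {ffun K -> bool} :=
  [ffun k => if k == i then ~~ x k else x k].

Definition strictly_terraced (K : finType) (F : {ffun K -> bool} -> rat) : Prop :=
  forall (x : {ffun K -> bool}) (i j : K), F x = 0 -> F (flip x i) = F (flip x j).

(* A circuit is given by: incidences J, vertices V, owner : J -> V
   (so J_v = {i | owner i = v}), external edges A, internal edges E (a
   partition of J \ A into pairs), constraints F v : {0,1}^{J_v} -> Q. *)
Definition is_circuit (J : finType) (A : {set J}) (E : {set {set J}}) : Prop :=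
  partition E (~: A) /\ (forall e, e \in E -> #|e| = 2%N).

Definition is_assignment (J : finType) (E : {set {set J}}) (x : {ffun J -> bool}) : bool :=
  [forall e in E, forall i in e, forall j in e, x i == x j].

Definition circuit_sig (J V : finType) (owner : J -> V) (A : {set J})
    (E : {set {set J}})
    (F : forall v : V, {ffun {i : J | owner i == v} -> bool} -> rat)
    (x : {ffun {i : J | i \in A} -> bool}) : rat :=
  \sum_(x' : {ffun J -> bool} |
          is_assignment E x' && [forall k : {i : J | i \in A}, x' (val k) == x k])
     \prod_(v : V) F v [ffun k : {i : J | owner i == v} => x' (val k)].

Definition circ_adj (J V : finType) (owner : J -> V) (E : {set {set J}}) : rel V :=
  fun u w => [exists e in E, exists i in e, exists j in e,
                [&& i != j, owner i == u & owner j == w]].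

Definition circuit_connected (J V : finType) (owner : J -> V) (E : {set {set J}}) : Prop :=
  forall u w : V, connect (circ_adj owner E) u w.

Arguments circuit_sig {J V} owner A E F x.

(* Main.v *)
Require Import Defs.
From HB Require Import structures.
From mathcomp Require Import all_boot all_order all_algebra.
Import Order.TTheory GRing.Theory Num.Theory.
Local Open Scope ring_scope.

Lemma flipK (K : finType) (y : {ffun K -> bool}) k : flip (flip y k) k = y.
Proof. apply/ffunP=> t; rewrite !ffunE; case: eqP => // _; exact: negbK. Qed.

Lemma flipC (K : finType) (y : {ffun K -> bool}) a b :
  flip (flip y a) b = flip (flip y b) a.
Proof. apply/ffunP=> t; rewrite !ffunE; by case: (t == a); case: (t == b). Qed.

Lemma assign_flip_out (J : finType) (E : {set {set J}}) (y : {ffun J -> bool}) k :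
  (forall e, e \in E -> k \notin e) ->
  is_assignment E (flip y k) = is_assignment E y.
Proof.
move=> h; apply: eq_forallb_in => e eE; apply: eq_forallb_in => i1 i1e.
apply: eq_forallb_in => j1 j1e; rewrite !ffunE.
have ni : i1 != k by apply/eqP=> eik; move: (h e eE); rewrite -eik i1e.
have nj : j1 != k by apply/eqP=> eik; move: (h e eE); rewrite -eik j1e.
by rewrite (negPf ni) (negPf nj).
Qed.

Theorem lemma14 (J V : finType) (owner : J -> V) (A : {set J})
    (E : {set {set J}})
    (F : forall v : V, {ffun {i : J | owner i == v} -> bool} -> rat) :
  is_circuit A E ->
  (forall v y, 0 <= F v y) ->
  circuit_connected owner E ->
  (forall v, strictly_terraced (F v)) ->
  strictly_terraced (circuit_sig owner A E F).
Proof.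
move=> [hpart hcard] hpos hconn hterr x i j hx0.
move/and3P: hpart => [/eqP hcov htriv _].
have notA : forall e k, e \in E -> k \in e -> k \notin A.
  move=> e k eE ke; have : k \in cover E by apply/bigcupP; exists e.
  by rewrite hcov inE.
pose P := fun y : {ffun J -> bool} =>
  is_assignment E y && [forall k : {i : J | i \in A}, y (val k) == x k].
pose W := fun y : {ffun J -> bool} =>
  \prod_(v : V) F v [ffun k : {i : J | owner i == v} => y (val k)].
pose Phi := fun k => \sum_(y | P y) W (flip y k).
have hW0 : forall y, P y -> W y = 0.
  move: hx0; rewrite /circuit_sig => /psumr_eq0P; apply => y _.
  by apply: prodr_ge0 => v _; exact: hpos.
have hsig : forall a : {i : J | i \in A},
    circuit_sig owner A E F (flip x a) = Phi (val a).
  move=> a; rewrite /circuit_sig /Phi.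
  rewrite (reindex (fun y => flip y (val a))) /=; last first.
    by apply: onW_bij; exists (fun y => flip y (val a)) => y; exact: flipK.
  apply: eq_bigl => y; rewrite /P assign_flip_out; last first.
    by move=> e eE; apply/negP => /(notA e _ eE); rewrite (valP a).
  congr (_ && _); apply: eq_forallb => t; rewrite !ffunE val_eqE.
  by case: (t == a) => //; case: (y _); case: (x _).
have hvert : forall k k', owner k = owner k' -> Phi k = Phi k'.
  move=> k k' ho; apply: eq_bigr => y Py.
  set u0 := owner k.
  have hk' : owner k' == u0 by rewrite /u0 ho.
  have hrest : forall kk v, v != owner kk ->
      [ffun t : {i : J | owner i == v} => flip y kk (val t)] =
      [ffun t : {i : J | owner i == v} => y (val t)].
    move=> kk v nv; apply/ffunP => t; rewrite !ffunE.
    case: eqP => // et; move: (valP t); rewrite et => /eqP ev.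
    by rewrite ev eqxx in nv.
  rewrite /W (bigD1 u0) //= [in RHS](bigD1 u0) //=.
  rewrite (eq_bigr (fun v => F v [ffun t : {i : J | owner i == v} => y (val t)]));
    last by move=> v nv; rewrite hrest.
  rewrite [in RHS](eq_bigr (fun v => F v [ffun t : {i : J | owner i == v} => y (val t)]));
    last by move=> v nv; rewrite hrest // -ho.
  set r := [ffun t : {i : J | owner i == u0} => y (val t)].
  have hr : forall kk (hkk : owner kk == u0),
      [ffun t : {i : J | owner i == u0} => flip y kk (val t)] = flip r (exist _ kk hkk).
    move=> kk hkk; apply/ffunP => t; rewrite !ffunE.
    have -> : (t == exist _ kk hkk) = (val t == kk) by rewrite -val_eqE.
    by [].
  case: (eqVneq (F u0 r) 0) => hz.
    congr (_ * _).
    rewrite (hr k (eqxx _)) (hr k' hk'); exact: hterr.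
  have /eqP := hW0 y Py; rewrite /W => /prodf_eq0 [v _ /eqP fv].
  have nv : v != u0.
    apply/eqP => ev; subst v; move: hz; rewrite /r.
    by rewrite fv eqxx.
  by rewrite (bigD1 v) //= fv mul0r !mulr0.
have hedge : forall u w, circ_adj owner E u w ->
    exists k k', [/\ owner k = u, owner k' = w & Phi k = Phi k'].
  move=> u w /existsP [e /andP [eE /existsP [k /andP [ke /existsP
    [k' /andP [k'e /and3P [nkk /eqP ok /eqP ok']]]]]]].
  exists k, k'; split => //.
  have nk'k : k' != k by rewrite eq_sym.
  have eq2 : e = [set k; k'].
    apply/eqP; rewrite eq_sym eqEcard cards2 nkk (hcard e eE) leqnn andbT.
    by apply/subsetP => t; rewrite !inE => /orP [] /eqP ->.
  pose h := fun y : {ffun J -> bool} => flip (flip y k) k'.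
  have hh : forall y, h (h y) = y.
    by move=> y; rewrite /h [flip (flip (flip y k) k') k]flipC !flipK.
  have hP : forall y, P y -> P (h y).
    move=> y /andP [ay ey]; apply/andP; split.
      apply/forall_inP => e' e'E; apply/forall_inP => i1 i1e;
        apply/forall_inP => j1 j1e.
      move/forall_inP: ay => /(_ e' e'E) /forall_inP /(_ i1 i1e)
        /forall_inP /(_ j1 j1e) /eqP hy.
      rewrite /h !ffunE.
      case: (eqVneq e' e) => [ee|ne].
        subst e'; move: i1e j1e hy; rewrite eq2 !inE
          => /orP[]/eqP-> /orP[]/eqP-> hy;
          by rewrite ?eqxx ?(negPf nkk) ?(negPf nk'k) /= ?hy ?eqxx.
      have dis := trivIsetP htriv e' e e'E eE ne.
      have nik : i1 != k by apply/eqP => ei; move: (disjointFr dis i1e); rewrite ei ke.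
      have nik' : i1 != k' by apply/eqP => ei; move: (disjointFr dis i1e); rewrite ei k'e.
      have njk : j1 != k by apply/eqP => ei; move: (disjointFr dis j1e); rewrite ei ke.
      have njk' : j1 != k' by apply/eqP => ei; move: (disjointFr dis j1e); rewrite ei k'e.
      by rewrite (negPf nik) (negPf nik') (negPf njk) (negPf njk') hy.
    apply/forallP => t; move/forallP: ey => /(_ t).
    rewrite /h !ffunE.
    have ntk : val t != k by apply/eqP => et; move: (notA e k eE ke); rewrite -et (valP t).
    have ntk' : val t != k' by apply/eqP => et; move: (notA e k' eE k'e); rewrite -et (valP t).
    by rewrite (negPf ntk) (negPf ntk').
  rewrite /Phi [LHS](reindex h) /=; last by apply: onW_bij; exists h.
  apply: eq_big => y.
    by apply/idP/idP => [/hP|/hP]; rewrite ?hh.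
  by move=> _; rewrite /h flipC flipK.
have hconn' : forall p u k, path (circ_adj owner E) u p -> owner k = u ->
    forall k', owner k' = last u p -> Phi k = Phi k'.
  elim=> [|a p IH] u k /=.
    by move=> _ ok k' ok'; apply: hvert; rewrite ok ok'.
  move=> /andP [hua hp] ok k' ok'.
  have [kk [kk' [okk okk' e]]] := hedge _ _ hua.
  rewrite (hvert k kk); last by rewrite ok okk.
  rewrite e; exact: IH hp okk' k' ok'.
have /connectP [p hp hl] := hconn (owner (val i)) (owner (val j)).
rewrite !hsig; exact: hconn' p _ _ hp erefl _ hl.
Qed.
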